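(* Let $(A,G)$ be an admissible pair with $A\in M_{Q_0}(\mathbb Z)$, and assume that $G$ has exactly two orbits in $Q_0$. Then $(A,G)$ is a stable admissible pair.
   Context: $Q_0$ finite; $A=(a_{ij})$ skew-symmetrizable ($DA$ skew-symmetric for a positive integer diagonal $D$). Mutation $\mu_k(B)=(b'_{ij})$: $b'_{ij}=-b_{ij}$ if $k\in\{i,j\}$, else $b_{ij}+\tfrac12(|b_{ik}|b_{kj}+b_{ik}|b_{kj}|)$. A permutation $g$ of $Q_0$ is an automorphism of $B$ if $b_{gi,gj}=b_{ij}$; a group $G$ of automorphisms of $B$ is admissible ($(B,G)$ an admissible pair) if for distinct $i,j$ in the same $G$-orbit there is no path of length $1$ or $2$ from $i$ to $j$ in the quiver of $B$ ($b_{ij}\le0$ and no $k$ with $b_{ik}>0$, $b_{kj}>0$). For a $G$-orbit $\mathbf i$, $\mu^G_{\mathbf i}=\prod_{j\in\mathbf i}\mu_j$. $(A,G)$ is stable if for every finite sequence of $G$-orbits $\mathbf i_1,\ldots,\mathbf i_n$, each pair $(\mu^G_{\mathbf i_m}\circ\cdots\circ\mu^G_{\mathbf i_1}(A),G)$, $1\le m\le n$, is admissible. *)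

(* Defs.v *)
From mathcomp Require Import all_boot all_order all_algebra all_fingroup.
Set Implicit Arguments. Unset Strict Implicit. Unset Printing Implicit Defensive.
Import Order.TTheory GRing.Theory Num.Theory.
Local Open Scope ring_scope.

Definition exmat (Q0 : finType) := Q0 -> Q0 -> int.

Definition skew_symmetrizable (Q0 : finType) (A : exmat Q0) : Prop :=
  exists d : Q0 -> nat, (forall i, (0 < d i)%N) /\
    forall i j, (d i)%:Z * A i j = - ((d j)%:Z * A j i).

Definition mutate (Q0 : finType) (k : Q0) (B : exmat Q0) : exmat Q0 :=
  fun i j => if (i == k) || (j == k) then - B i j
             else B i j + ((`|B i k| * B k j + B i k * `|B k j|) %/ 2)%Z.

Definition is_autom (Q0 : finType) (B : exmat Q0) (g : {perm Q0}) : Prop :=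
  forall i j, B (g i) (g j) = B i j.

Definition Gorbits (Q0 : finType) (G : {group {perm Q0}}) : {set {set Q0}} :=
  orbit 'P G @: [set: Q0].

Definition admissible (Q0 : finType) (B : exmat Q0) (G : {group {perm Q0}}) : Prop :=
  (forall g, g \in G -> is_autom B g) /\
  forall i j, i \in orbit 'P G j -> i != j ->
    B i j <= 0 /\ ~ (exists k, 0 < B i k /\ 0 < B k j).

Definition orbit_mutate (Q0 : finType) (I : {set Q0}) (B : exmat Q0) : exmat Q0 :=
  foldr (@mutate Q0) B (enum I).

(* iterated orbit mutation: first element of the list is applied first *)
Definition orbit_mutate_seq (Q0 : finType) (s : seq {set Q0}) (B : exmat Q0)
  : exmat Q0 := foldl (fun B' I => orbit_mutate I B') B s.

Definition stable (Q0 : finType) (A : exmat Q0) (G : {group {perm Q0}}) : Prop :=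
  forall s : seq {set Q0}, all (fun I => I \in Gorbits G) s ->
    forall m, (1 <= m <= size s)%N ->
      admissible (orbit_mutate_seq (take m s) A) G.

(* Main.v *)
Require Import Defs.
From mathcomp Require Import all_boot all_order all_algebra all_fingroup.
From mathcomp Require Import zify.
Set Implicit Arguments. Unset Strict Implicit. Unset Printing Implicit Defensive.
Import Order.TTheory GRing.Theory Num.Theory.

Local Open Scope ring_scope.

Definition fm (a b : int) : int := ((`|a| * b + a * `|b|) %/ 2)%Z.

Lemma fE (a b : int) : fm a b =
  if (0 < a) && (0 < b) then a * b else if (a < 0) && (b < 0) then - (a*b) else 0.
Proof.
rewrite /fm.
case: (ltrP 0 a) => ha; case: (ltrP 0 b) => hb /=.
- rewrite !gtr0_norm //. nia.
- rewrite gtr0_norm // ler0_norm //. have ->: (a < 0) = false by lia. simpl. nia.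
- rewrite ler0_norm // gtr0_norm //. have ->: (b < 0) = false by lia. rewrite andbF. nia.
- rewrite !ler0_norm //. case: (ltrP a 0) => /= h; case: (ltrP b 0) => /= h'; nia.
Qed.

Lemma fm0l b : fm 0 b = 0.
Proof. by rewrite fE ltxx. Qed.

Lemma fm0r a : fm a 0 = 0.
Proof. by rewrite fE ltxx !andbF. Qed.

Lemma mutateE (Q0 : finType) (k : Q0) (B : exmat Q0) i j :
  mutate k B i j = if (i == k) || (j == k) then - B i j else B i j + fm (B i k) (B k j).
Proof. by []. Qed.

Definition skewd (Q0 : finType) (d : Q0 -> nat) (B : exmat Q0) : Prop :=
  forall i j, (d i)%:Z * B i j = - ((d j)%:Z * B j i).

Lemma mut_skew (Q0 : finType) (d : Q0 -> nat) (dpos : forall i, (0 < d i)%N)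
  (B : exmat Q0) (k : Q0) : skewd d B -> skewd d (mutate k B).
Proof.
move=> sk i j; rewrite !mutateE.
case: (eqVneq i k) => [->|ik]; case: (eqVneq j k) => [->|jk] /=;
  rewrite ?eqxx ?orbT ?orbF /=; try by rewrite !mulrN; have := sk i j; have := sk k k; have := sk i k; have := sk k j; lia.
rewrite !mulrDr sk opprD; congr (_ + _).
have hik := sk i k; have hkj := sk k j.
have di := dpos i; have dj := dpos j; have dk := dpos k.
have e : (d i)%:Z * (B i k * B k j) = (d j)%:Z * (B j k * B k i).
  rewrite mulrA hik mulNr (mulrC (d k)%:Z) -mulrA hkj mulrN opprK mulrCA.
  by congr (_ * _); rewrite mulrC.
have s1 : (0 < B i k) = (B k i < 0) by apply/idP/idP => H; nia.
have s2 : (B i k < 0) = (0 < B k i) by apply/idP/idP => H; nia.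
have s3 : (0 < B k j) = (B j k < 0) by apply/idP/idP => H; nia.
have s4 : (B k j < 0) = (0 < B j k) by apply/idP/idP => H; nia.
rewrite !fE -s2 -s3 -s1 -s4.
case: (ltrP 0 (B i k)) => h1; case: (ltrP 0 (B k j)) => h2;
  case: (ltrP (B i k) 0) => h3; case: (ltrP (B k j) 0) => h4 /=; nia.
Qed.

Lemma foldr_mutE (Q0 : finType) (s : seq Q0) (B : exmat Q0) :
  uniq s -> (forall k k', k \in s -> k' \in s -> B k k' = 0) ->
  forall i j, foldr (@mutate Q0) B s i j =
    if (i \in s) || (j \in s) then - B i j
    else B i j + \sum_(k <- s) fm (B i k) (B k j).
Proof.
elim: s => [|k s IH] /=.
  by move=> _ _ i j; rewrite big_nil addr0.
case/andP=> ks us Z.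
have Z' : forall x y, x \in s -> y \in s -> B x y = 0.
  by move=> x y hx hy; apply: Z; rewrite in_cons ?hx ?hy orbT.
have IH' := IH us Z'.
have Zk1 : forall y, y \in s -> B k y = 0.
  by move=> y hy; apply: Z; rewrite in_cons ?eqxx ?hy ?orbT.
have Zk2 : forall y, y \in s -> B y k = 0.
  by move=> y hy; apply: Z; rewrite in_cons ?eqxx ?hy ?orbT.
have Zkk : B k k = 0 by apply: Z; rewrite in_cons eqxx.
move=> i j; rewrite mutateE !IH' !in_cons big_cons.
have sumk1 : forall y, \sum_(k' <- s) fm (B k k') (B k' y) = 0.
  by move=> y; rewrite big_seq big1 // => k' hk'; rewrite Zk1 // fm0l.
have sumk2 : forall y, \sum_(k' <- s) fm (B y k') (B k' k) = 0.
  by move=> y; rewrite big_seq big1 // => k' hk'; rewrite Zk2 // fm0r.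
rewrite (negbTE ks) /=.
case: (eqVneq i k) => [->|ik]; case: (eqVneq j k) => [->|jk] /=;
  rewrite ?eqxx ?orbT ?orbF ?(negbTE ks) /= ?sumk1 ?sumk2 ?addr0;
  case: (boolP (i \in s)) => hi; case: (boolP (j \in s)) => hj /=;
  try (by move: ks; rewrite hi); try (by move: ks; rewrite hj);
  try rewrite (Zk1 _ hj); try rewrite (Zk2 _ hi);
  rewrite ?Zkk ?oppr0 ?opprK ?fm0l ?fm0r ?addr0 //.
rewrite -!addrA; congr (_ + _); exact: addrC.
Qed.

Lemma orbit_mem_eq (Q0 : finType) (G : {group {perm Q0}}) x0 i j :
  i \in orbit 'P G j -> (i \in orbit 'P G x0) = (j \in orbit 'P G x0).
Proof. by move=> h; rewrite (orbit_transl x0 h). Qed.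

Lemma zorb (Q0 : finType) (G : {group {perm Q0}}) (d : Q0 -> nat)
  (dpos : forall i, (0 < d i)%N) (B : exmat Q0) :
  skewd d B -> admissible B G -> forall i j, i \in orbit 'P G j -> B i j = 0.
Proof.
move=> sk [_ ad] i j hij.
have di := dpos i; have dj := dpos j.
case: (eqVneq i j) => [<-|ne].
  have := sk i i; lia.
have [h1 _] := ad i j hij ne.
have := ad j i; rewrite orbit_sym eq_sym => /(_ hij ne) [h2 _].
have := sk i j; nia.
Qed.

Lemma two_orb (Q0 : finType) (G : {group {perm Q0}}) x0 i j :
  #|Gorbits G| = 2 -> i \notin orbit 'P G x0 -> j \notin orbit 'P G x0 ->
  i \in orbit 'P G j.
Proof.
move=> two hi hj.
have inO : forall y, orbit 'P G y \in Gorbits G.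
  by move=> y; apply: imset_f; rewrite inE.
have := cardsD1 (orbit 'P G x0) (Gorbits G); rewrite two inO.
move=> e; have /cards1P [X hX] : #|Gorbits G :\ orbit 'P G x0| == 1%N.
  by move: e => /= /eqP; rewrite add1n eqSS eq_sym.

have mi : orbit 'P G i \in Gorbits G :\ orbit 'P G x0.
  rewrite !inE inO andbT; apply/eqP => e'; move: hi; by rewrite -e' orbit_refl.
have mj : orbit 'P G j \in Gorbits G :\ orbit 'P G x0.
  rewrite !inE inO andbT; apply/eqP => e'; move: hj; by rewrite -e' orbit_refl.
move: mi mj; rewrite hX !inE => /eqP ei /eqP ej.
by rewrite ej -ei orbit_refl.
Qed.

Lemma step (Q0 : finType) (G : {group {perm Q0}}) (d : Q0 -> nat)
  (dpos : forall i, (0 < d i)%N) (B : exmat Q0) (I : {set Q0}) :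
  #|Gorbits G| = 2 -> I \in Gorbits G ->
  skewd d B -> admissible B G ->
  skewd d (orbit_mutate I B) /\ admissible (orbit_mutate I B) G.
Proof.
move=> two HI sk adm.
have skC : skewd d (orbit_mutate I B).
  rewrite /orbit_mutate; elim: (enum I) => //= k s IH; exact: mut_skew.
split=> //.
case/imsetP: HI => x0 _ eI.
have Z := zorb dpos sk adm.
have CE : forall i j, orbit_mutate I B i j =
    if (i \in I) || (j \in I) then - B i j
    else B i j + \sum_(k in I) fm (B i k) (B k j).
  move=> i j; rewrite /orbit_mutate foldr_mutE ?enum_uniq ?mem_enum ?big_enum //.
  move=> k k'; rewrite !mem_enum eI => hk hk'; apply: Z.
  by rewrite (orbit_transl k' hk) orbit_sym.
case: adm => aut ad.
have memI : forall i j, i \in orbit 'P G j -> (i \in I) = (j \in I).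
  by move=> i j h; rewrite eI (orbit_mem_eq x0 h).
have di := dpos.
split.
- move=> g gG i j.
  have gi : forall x, (g x \in I) = (x \in I).
    by move=> x; apply: memI; exact: (mem_orbit 'P x gG).
  rewrite !CE !gi (aut g gG).
  case: ifP => // _; congr (_ + _).
  rewrite (reindex_inj (@perm_inj _ g)) /=.
  apply: eq_big => [k|k _]; first by rewrite gi.
  by rewrite !(aut g gG).
- have claim1 : forall x y, x \notin I -> x \in orbit 'P G y -> x != y ->
      orbit_mutate I B x y <= 0.
    move=> x y hx hxy nxy.
    have hy : y \notin I by rewrite -(memI _ _ hxy).
    rewrite CE (negbTE hx) (negbTE hy) /= (Z _ _ hxy) add0r.
    apply: sumr_le0 => k _.
    have [_ np] := ad x y hxy nxy.
    rewrite fE; case: ifP => [/andP [h1 h2]|_]; first by case: np; exists k.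
    case: ifP => // /andP [h1 h2]; nia.
  move=> i j hij ne.
  have hji : j \in orbit 'P G i by rewrite orbit_sym.
  have nji : j != i by rewrite eq_sym.
  have [_ np] := ad j i hji nji.
  case: (boolP (i \in I)) => hi.
  + have hj : j \in I by rewrite -(memI _ _ hij).
    rewrite CE hi /= (Z _ _ hij) oppr0; split => //.
    case=> k [h1 h2].
    move: h1 h2; rewrite !CE hi hj orbT /= => h1 h2.
    apply: np; exists k; split.
      have := sk j k; have := di j; have := di k; nia.
    have := sk k i; have := di i; have := di k; nia.
  + have hj : j \notin I by rewrite -(memI _ _ hij).
    split; first exact: claim1.
    case=> k [h1 h2].
    case: (boolP (k \in I)) => hk.
    * move: h1 h2; rewrite !CE hk orbT /= => h1 h2.
      apply: np; exists k; split.
        have := sk j k; have := di j; have := di k; nia.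
      have := sk k i; have := di i; have := di k; nia.
    * have hki : k \in orbit 'P G i.
        by apply: (two_orb (x0:=x0) two); rewrite -eI.
      case: (eqVneq k i) => [eki|nki].
        subst k; have := skC i i; have := di i; nia.
      have hik : i \in orbit 'P G k by rewrite orbit_sym.
      have nik : i != k by rewrite eq_sym.
      have := claim1 i k hi hik nik; lia.
Qed.

Lemma seq_step (Q0 : finType) (G : {group {perm Q0}}) (d : Q0 -> nat)
  (dpos : forall i, (0 < d i)%N) :
  #|Gorbits G| = 2 ->
  forall s, all (fun I => I \in Gorbits G) s ->
  forall B, skewd d B -> admissible B G ->
  skewd d (orbit_mutate_seq s B) /\ admissible (orbit_mutate_seq s B) G.
Proof.
move=> two; elim=> [|I s IH] //= /andP [hI hs] B sk adm.
have [sk' adm'] := step dpos two hI sk adm.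
exact: IH.
Qed.

Theorem mainTheorem13 (Q0 : finType) (A : exmat Q0) (G : {group {perm Q0}}) :
  skew_symmetrizable A ->
  admissible A G ->
  #|Gorbits G| = 2 ->
  stable A G /\ admissible A G.
Proof.
move=> [d [dpos sk]] adm two; split => //.
move=> s hs m _.
have hs' : all (fun I => I \in Gorbits G) (take m s).
  by move: hs; rewrite -{1}(cat_take_drop m s) all_cat => /andP [].
by have [] := seq_step dpos two hs' sk adm.
Qed.
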